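(* In the roundabout exploration process described in the context, let $t\in[N]$ and let $r$ be an integer with $N\ge r\ge 2k+1$. If $|A(t)|\ge r$, then \[t\le\frac{2N-r}{r-2k}.\]
   Context: Let $n\ge 2$ and $k$ be natural numbers, $T$ a tree on an $n$-element vertex set $V$, and $N=2(n-1)$. Fix a root $r_0$ and a DFS tour of $T$ starting and ending at $r_0$ that traverses each edge of $T$ exactly twice, giving a cyclic vertex sequence $(v_1,\dots,v_N,v_{N+1})$ with $v_{N+1}=v_1=r_0$, and tour edges $e_i=\{v_i,v_{i+1}\}$ for $i\in[N]$. For $i,j\in[N]$ the circular interval $[\![i,j]\!]$ is $\{i,i+1,\dots,j\}$ if $i\le j$ and $\{i,\dots,N,1,\dots,j\}$ if $i>j$. Let $\langle G_1,\dots,G_N\rangle$ be graphs on $V$, each containing all but at most $k$ edges of $T$. Roundabout exploration process: agents $a_1,\dots,a_N$ with initial states $s_i(0)=i$. For steps $t=1,\dots,N$: (Movement) for every $i\in[N]$, if $s_i(t-1)=q$ then $s_i(t)=(q\bmod N)+1$ if $e_q\in E(G_t)$, and $s_i(t)=q$ otherwise. Let $D_i(t)=[\![i,s_i(t)]\!]$ and $D_i(0)=\{i\}$. (Elimination) $A(0)=\{a_1,\dots,a_N\}$; $A(t)$ is obtained from $A(t-1)$ by repeatedly removing an arbitrary agent $a_i$ of the current set with $D_i(t)\subseteq\bigcup D_j(t)$ over the other agents $a_j$ of the current set, until no such agent remains. *)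

(* Defs.v *)
From mathcomp Require Import all_boot all_order all_algebra.
Set Implicit Arguments. Unset Strict Implicit. Unset Printing Implicit Defensive.

(* Tour positions / agents are indexed by 'I_N, 0-based: index q : 'I_N
   stands for the paper's index q+1. *)

Section Defs.
Variable V : finType.

Definition is_graph (E : {set {set V}}) : Prop := forall e, e \in E -> #|e| = 2.

Definition adj (E : {set {set V}}) : rel V := fun x y => [set x; y] \in E.

Definition has_cycle (E : {set {set V}}) : Prop :=
  exists c : seq V, [/\ 3 <= size c, uniq c & cycle (adj E) c].

Definition is_tree (E : {set {set V}}) : Prop :=
  [/\ is_graph E, (forall x y, connect (adj E) x y) & ~ has_cycle E].

Variable N : nat.
Variable v : nat -> V.   (* v q = paper's v_{q+1}, q = 0..N *)

Definition tour_edge (q : 'I_N) : {set V} := [set v q; v q.+1].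

Definition is_tour (T : {set {set V}}) (r0 : V) : Prop :=
  [/\ v 0 = r0, v N = r0,
      (forall q : 'I_N, tour_edge q \in T) &
      (forall e, e \in T -> #|[set q : 'I_N | tour_edge q == e]| = 2)].

Definition cinterval (i j : 'I_N) : {set 'I_N} :=
  [set x : 'I_N | if i <= j then (i <= x) && (x <= j) else (i <= x) || (x <= j)].

Variable G : nat -> {set {set V}}.  (* G t = G_t, for t = 1..N *)

Fixpoint pos (t : nat) (i : 'I_N) : 'I_N :=
  match t with
  | 0 => i
  | t'.+1 => let q := pos t' i in
             if tour_edge q \in G t'.+1 then ordS q else q
  end.

Definition Dset (t : nat) (i : 'I_N) : {set 'I_N} := cinterval i (pos t i).

Definition elim_step (t : nat) : rel {set 'I_N} := fun S S' =>
  [exists i in S, (Dset t i \subset \bigcup_(j in S :\ i) Dset t j) && (S' == S :\ i)].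

Definition elim_stable (t : nat) (S : {set 'I_N}) : bool :=
  [forall i in S, ~~ (Dset t i \subset \bigcup_(j in S :\ i) Dset t j)].

Definition elim_result (t : nat) (S S' : {set 'I_N}) : Prop :=
  connect (elim_step t) S S' /\ elim_stable t S'.

Definition valid_run (A : nat -> {set 'I_N}) : Prop :=
  A 0 = setT /\ forall t, 1 <= t <= N -> elim_result t (A t.-1) (A t).

End Defs.

(* Main.v *)
Require Import Defs.
From mathcomp Require Import all_boot all_order all_algebra zify.
Set Warnings "-all".
Set Implicit Arguments. Unset Strict Implicit.

Definition dist (N a b : nat) := if a <= b then b - a else b + N - a.

Lemma mem_cint N (i j y : 'I_N) : (y \in cinterval i j) = (dist N i y <= dist N i j).
Proof.
rewrite /cinterval inE /dist.
have hi := ltn_ord i; have hj := ltn_ord j; have hy := ltn_ord y.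
case: (leqP i j) => h1; case: (leqP i y) => h2; apply/idP/idP; lia.
Qed.

Lemma mem_cint_x N (i j x y : 'I_N) : x \in cinterval i j ->
  (y \in cinterval i j) = (dist N x y <= dist N x j) || (dist N y x <= dist N i x).
Proof.
rewrite !mem_cint /dist.
have hi := ltn_ord i; have hj := ltn_ord j; have hy := ltn_ord y; have hx := ltn_ord x.
case: (leqP i j) => h1; case: (leqP i y) => h2; case: (leqP i x) => h3;
case: (leqP x y) => h4; case: (leqP x j) => h5; case: (leqP y x) => h6; move=> H; apply/idP/idP; lia.
Qed.

Lemma cover3 (a1 a2 a3 b1 b2 b3 : nat) :
  [\/ (a1 <= maxn a2 a3) && (b1 <= maxn b2 b3),
      (a2 <= maxn a1 a3) && (b2 <= maxn b1 b3) |
      (a3 <= maxn a1 a2) && (b3 <= maxn b1 b2)].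
Proof.
case: (leqP a1 (maxn a2 a3)); case: (leqP b1 (maxn b2 b3));
case: (leqP a2 (maxn a1 a3)); case: (leqP b2 (maxn b1 b3));
case: (leqP a3 (maxn a1 a2)); case: (leqP b3 (maxn b1 b2)); move=> *;
  try (by constructor 1); try (by constructor 2); try (by constructor 3); lia.
Qed.

Lemma cover_gen N (i1 i2 i3 j1 j2 j3 x : 'I_N) :
  x \in cinterval i1 j1 -> x \in cinterval i2 j2 -> x \in cinterval i3 j3 ->
  dist N i1 x <= maxn (dist N i2 x) (dist N i3 x) ->
  dist N x j1 <= maxn (dist N x j2) (dist N x j3) ->
  cinterval i1 j1 \subset cinterval i2 j2 :|: cinterval i3 j3.
Proof.
move=> h1 h2 h3 ha hb; apply/subsetP => y; rewrite in_setU (mem_cint_x _ h1) (mem_cint_x _ h2) (mem_cint_x _ h3).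
move: ha hb; lia.
Qed.

Section S.
Variables (V : finType) (N : nat) (v : nat -> V) (G : nat -> {set {set V}}).
Local Notation D := (@Dset V N v G).

Lemma stable_not_sub t S i j : @elim_stable V N v G t S -> i \in S -> j \in S -> i != j ->
  ~~ (D t j \subset D t i).
Proof.
move=> /forallP /(_ j) /implyP H0 iS jS ij; have H := H0 jS.
apply/negP => sub; move/negP: H; apply.
apply: (subset_trans sub); apply: (bigcup_sup i).
by rewrite in_setD1 iS andbT; apply: contra ij => /eqP ->.
Qed.

Lemma stable_not_sub2 t S i j k : @elim_stable V N v G t S -> i \in S -> j \in S -> k \in S ->
  i != j -> i != k ->
  ~~ (D t i \subset D t j :|: D t k).
Proof.
move=> /forallP /(_ i) /implyP H0 iS jS kS ij ik; have H := H0 iS.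
apply/negP => sub; move/negP: H; apply.
apply: (subset_trans sub); apply/subsetP => y; rewrite in_setU => /orP [] hy.
  by apply/bigcupP; exists j => //; rewrite in_setD1 eq_sym ij jS.
by apply/bigcupP; exists k => //; rewrite in_setD1 eq_sym ik kS.
Qed.

Lemma stable_count t S (x : 'I_N) : @elim_stable V N v G t S ->
  #|[set i in S | x \in D t i]| <= 2.
Proof.
move=> st; rewrite leqNgt; apply/negP => c.
set B := [set i in S | x \in D t i] in c.
have [i1 i1B] : exists i1, i1 \in B by apply/set0Pn; rewrite -card_gt0; lia.
have c1 : 1 < #|B :\ i1| by rewrite (cardsD1 i1 B) i1B in c; lia.
have [i2 i2B] : exists i2, i2 \in B :\ i1 by apply/set0Pn; rewrite -card_gt0; lia.
have c2 : 0 < #|B :\ i1 :\ i2| by rewrite (cardsD1 i2 (B :\ i1)) i2B in c1; lia.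
have [i3 i3B] : exists i3, i3 \in B :\ i1 :\ i2 by apply/set0Pn; rewrite -card_gt0.
move: i1B i2B i3B; rewrite !in_setD1 /B !in_set => /andP [s1 x1] /and3P [n21 s2 x2] /and4P [n32 n31 s3 x3].
have {}x1 : x \in cinterval i1 (@pos V N v G t i1) by rewrite inE.
have {}x2 : x \in cinterval i2 (@pos V N v G t i2) by rewrite inE.
have {}x3 : x \in cinterval i3 (@pos V N v G t i3) by rewrite inE.
case: (cover3 (dist N i1 x) (dist N i2 x) (dist N i3 x)
              (dist N x (@pos V N v G t i1)) (dist N x (@pos V N v G t i2)) (dist N x (@pos V N v G t i3))) => /andP [ha hb].
- have := cover_gen x1 x2 x3 ha hb.
  by apply/negP; apply: (stable_not_sub2 st) => //; rewrite eq_sym.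
- have := cover_gen x2 x1 x3 ha hb.
  by apply/negP; apply: (stable_not_sub2 st) => //; rewrite eq_sym.
- have := cover_gen x3 x1 x2 ha hb.
  by apply/negP; apply: (stable_not_sub2 st) => //.
Qed.

Lemma stable_sum t S : @elim_stable V N v G t S -> \sum_(i in S) #|D t i| <= 2 * N.
Proof.
move=> st.
have -> : \sum_(i in S) #|D t i| = \sum_(i in S) \sum_(x : 'I_N) (x \in D t i : nat).
  apply: eq_bigr => i _; rewrite -sum1_card big_mkcond /=; apply: eq_bigr => x _.
  by case: (x \in D t i).
rewrite exchange_big /=.
have -> : \sum_(x : 'I_N) \sum_(i in S) (x \in D t i : nat) = \sum_(x : 'I_N) #|[set i in S | x \in D t i]|.
  apply: eq_bigr => x _; rewrite -sum1_card big_mkcond /= [RHS]big_mkcond /=; apply: eq_bigr => i _.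
  have -> : (i \in [set j in S | x \in D t j]) = (i \in S) && (x \in D t i) by rewrite inE.
  by case: (i \in S); case: (x \in D t i).
apply: leq_trans (_ : \sum_(x : 'I_N) 2 <= _).
  by apply: leq_sum => x _; apply: stable_count.
by rewrite sum_nat_const card_ord mulnC.
Qed.
End S.

Lemma sum_boolE (T : finType) (P : pred T) : \sum_(i : T) (P i : nat) = #|P|.
Proof. by rewrite -sum1_card [RHS]big_mkcond; apply: eq_bigr => i _; rewrite unfold_in; case: (P i). Qed.

Lemma sum_boolE_in (T : finType) (S : {set T}) (P : pred T) :
  \sum_(i in S) (P i : nat) = #|[set i in S | P i]|.
Proof.
rewrite -sum1_card [RHS]big_mkcond [LHS]big_mkcond; apply: eq_bigr => i _.
rewrite inE; by case: (i \in S); case: (P i).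
Qed.

Lemma ordS_val N (q : 'I_N) : q.+1 %% N = if q.+1 < N then q.+1 else 0.
Proof.
case: ltnP => h; first by rewrite modn_small.
have -> : q.+1 = N by have := ltn_ord q; lia.
by rewrite modnn.
Qed.

Section S.
Variables (V : finType) (N : nat) (v : nat -> V) (G : nat -> {set {set V}}).
Local Notation D := (@Dset V N v G).
Local Notation pos := (@pos V N v G).
Local Notation edge := (@tour_edge V N v).

Lemma blocked_bound (T : {set {set V}}) (Gt : {set {set V}}) k :
  (forall q, edge q \in T) -> (forall e, e \in T -> #|[set q | edge q == e]| = 2) ->
  #|T :\: Gt| <= k -> #|[set q | edge q \notin Gt]| <= 2 * k.
Proof.
move=> hT h2 hk.
have -> : #|[set q | edge q \notin Gt]| = \sum_q (edge q \notin Gt : nat).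
  by rewrite (sum_boolE (fun q => edge q \notin Gt)); apply: eq_card => q; rewrite inE.
apply: (@leq_trans (\sum_q \sum_(e in T :\: Gt) (edge q == e : nat))).
  apply: leq_sum => q _; case hq: (edge q \notin Gt) => //=.
  by rewrite (bigD1 (edge q)) ?eqxx //= in_setD hq hT.
rewrite exchange_big /=.
apply: (@leq_trans (\sum_(e in T :\: Gt) 2)).
  apply: leq_sum => e; rewrite in_setD => /andP [_ eT].
  by rewrite (sum_boolE (fun q => edge q == e)) -(h2 e eT); apply: eq_leq; apply: eq_card => q; rewrite inE.
by rewrite sum_nat_const mulnC leq_mul2l hk orbT.
Qed.
End S.

Section M.
Variables (V : finType) (N : nat) (v : nat -> V) (G : nat -> {set {set V}}).
Local Notation D := (@Dset V N v G).
Local Notation pos := (@pos V N v G).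
Local Notation edge := (@tour_edge V N v).

Fixpoint mv (t : nat) (i : 'I_N) : nat :=
  match t with 0 => 0 | t'.+1 => mv t' i + (edge (pos t' i) \in G t'.+1) end.

Lemma mv_le t i : mv t i <= t.
Proof. elim: t => //= t IH; case: (_ \in _) => /=; lia. Qed.

Lemma dist_pos t i : mv t i < N -> dist N i (pos t i) = mv t i.
Proof.
elim: t => [|t IH] /=; first by rewrite /dist leqnn subnn.
case b: (edge (pos t i) \in G t.+1) => /= h; last by rewrite addn0 in h *; apply: IH.
have := IH ltac:(lia); move: (pos t i) => q.
have hi := ltn_ord i; have hq := ltn_ord q.
rewrite /dist ordS_val; case: (leqP i q) => h1; case: (ltnP q.+1 N) => h2; try case: (leqP i q.+1) => h3;
  try case: (leqP i 0) => h4; lia.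
Qed.

Lemma card_D t i : mv t i < N -> mv t i + 1 <= #|D t i|.
Proof.
move=> h; have hd := dist_pos h.
set d := mv t i in h hd *.
have hi := ltn_ord i.
have addlt : forall k : 'I_d.+1, (if i + k < N then i + k else i + k - N) < N.
  move=> k; have := ltn_ord k; case: (ltnP (i + k) N) => hh ?; lia.
pose f := fun k : 'I_d.+1 => Ordinal (addlt k).
have df : forall k, dist N i (f k) = k.
  move=> k; have := ltn_ord k; rewrite /dist /=; case: ifP => /=; case: leqP => /=; lia.
have finj : injective f by move=> k1 k2 e; apply: val_inj; rewrite /= -(df k1) -(df k2) e.
rewrite addn1 -[d.+1]card_ord -cardsT -(card_imset _ finj).
apply: subset_leq_card; apply/subsetP => y /imsetP [k _ ->].
rewrite /Dset mem_cint df hd; have := ltn_ord k; lia.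
Qed.
End M.

Lemma nest N (i j p : 'I_N) : dist N i p <= dist N j p -> cinterval i p \subset cinterval j p.
Proof.
move=> h; apply/subsetP => y.
have hpi : p \in cinterval i p by rewrite mem_cint.
have hpj : p \in cinterval j p by rewrite mem_cint.
rewrite (mem_cint_x _ hpi) (mem_cint_x _ hpj); move: h; lia.
Qed.

Section R.
Variables (V : finType) (N : nat) (v : nat -> V) (G : nat -> {set {set V}}).
Local Notation D := (@Dset V N v G).
Local Notation pos := (@pos V N v G).
Local Notation edge := (@tour_edge V N v).
Local Notation mv := (@mv V N v G).

Lemma stable_inj t S : @elim_stable V N v G t S -> {in S &, injective (pos t)}.
Proof.
move=> st i j iS jS e; apply/eqP; apply/negPn/negP => ij.
case/orP: (leq_total (dist N i (pos t i)) (dist N j (pos t j))) => h.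
- have : D t i \subset D t j by rewrite /Dset -e; apply: nest; move: h; rewrite -e.
  by apply/negP; apply: (stable_not_sub st) => //; rewrite eq_sym.
- have : D t j \subset D t i by rewrite /Dset e; apply: nest; move: h; rewrite e.
  by apply/negP; apply: (stable_not_sub st).
Qed.

Lemma connect_step_sub t S S' : connect (@elim_step V N v G t) S S' -> S' \subset S.
Proof.
case/connectP => p; elim: p S => [|S1 p IH] S /=; first by move=> _ ->.
case/andP => e1 ep hl; apply: (subset_trans (IH _ ep hl)).
case/existsP: e1 => i /andP [_ /andP [_ /eqP ->]]; exact: subsetDl.
Qed.

Lemma run_mono A : @valid_run V N v G A -> forall t u, u <= t <= N -> A t \subset A u.
Proof.
move=> [_ hr]; elim=> [|t IH] u /andP [h1 h2]; first by have -> : u = 0 by lia.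
case: (leqP u t) => hu; last by have -> : u = t.+1 by lia.
apply: (subset_trans _ (IH u _)); last by lia.
have [hc _] := hr t.+1 ltac:(lia); exact: connect_step_sub hc.
Qed.

Lemma run_stable A t : @valid_run V N v G A -> 1 <= t <= N -> @elim_stable V N v G t (A t).
Proof. by move=> [_ hr] h; have [_ ?] := hr t h. Qed.

Lemma mv_sum A t k : @valid_run V N v G A -> t <= N ->
  (forall u, u < t -> #|[set q | edge q \notin G u.+1]| <= 2 * k) ->
  t * (#|A t| - 2 * k) <= \sum_(i in A t) mv t i.
Proof.
move=> vr htN hb.
have inj : forall u, u < t -> {in A t &, injective (pos u)}.
  move=> u hu; case: u hu => [|u] hu; first by move=> i j _ _.
  move=> i j iS jS; apply: (stable_inj (run_stable vr (t:=u.+1) _)); try lia;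
  by apply: (subsetP (run_mono vr (t:=t) (u:=u.+1) _)) => //; lia.
suff : forall u, u <= t -> u * (#|A t| - 2 * k) <= \sum_(i in A t) mv u i by apply.
elim=> [|u IH] hu; first by rewrite mul0n.
rewrite /= big_split /= mulSn addnC.
apply: leq_add; first by apply: IH; lia.
set b := fun i => edge (pos u i) \in G u.+1.
have e1 : \sum_(i in A t) (b i : nat) + \sum_(i in A t) (~~ b i : nat) = #|A t|.
  by rewrite -big_split /= -sum1_card; apply: eq_bigr => i _; case: (b i).
have e2 : \sum_(i in A t) (~~ b i : nat) <= 2 * k.
  rewrite (sum_boolE_in _ (fun i => ~~ b i)) -(card_in_imset (f := pos u)).
    apply: leq_trans (hb u hu); apply: subset_leq_card; apply/subsetP => q /imsetP [i].
    by rewrite inE => /andP [_ hi] ->; rewrite inE.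
  by move=> i j; rewrite !inE => /andP [iS _] /andP [jS _]; apply: (inj u hu).
rewrite /b in e1 e2 *; rewrite -e1; apply: leq_trans (leq_sub2l _ e2) _; rewrite addnK; exact: leqnn.
Qed.
End R.

Lemma dist_lt N (i y : 'I_N) : dist N i y < N.
Proof. rewrite /dist; have := ltn_ord i; have := ltn_ord y; case: (leqP i y); lia. Qed.

Lemma key (n k : nat) (V : finType) (T : {set {set V}}) (r0 : V)
  (v : nat -> V) (G : nat -> {set {set V}}) (A : nat -> {set 'I_(2 * (n - 1))})
  (t r : nat) :
  2 <= n ->
  is_tour (2 * (n - 1)) v T r0 ->
  (forall t', 1 <= t' <= 2 * (n - 1) ->
     is_graph (G t') /\ #|T :\: G t'| <= k) ->
  valid_run v G A ->
  1 <= t <= 2 * (n - 1) ->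
  r >= 2 * k + 1 ->
  #|A t| >= r ->
  r + t * (r - 2 * k) <= 2 * (2 * (n - 1)).
Proof.
set N := 2 * (n - 1).
move=> hn [_ _ hT hT2] hG vr ht hr hA.
have hN : 2 <= N by rewrite /N; lia.
have hb : forall u, u < t -> #|[set q | @tour_edge V N v q \notin G u.+1]| <= 2 * k.
  move=> u hu; apply: (blocked_bound hT hT2); have h1 : 1 <= u.+1 <= N by lia. by have [_ ?] := hG u.+1 h1.
case: (boolP [exists i in A t, N <= @mv V N v G t i]).
- case/existsP => i /andP [iA hi].
  have hmt := @mv_le V N v G t i.
  case: t ht hb hA iA hi hmt => [|u] ht hb hA iA hi hmt; first by lia.
  have hu : u = N - 1 by lia.
  have hmu : @mv V N v G u i = N - 1.
    have := @mv_le V N v G u i; move: hi; rewrite /=; case: (_ \in _) => /=; lia.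
  have hd := @dist_pos V N v G u i ltac:(lia).
  have u1 : 1 <= u <= N by lia.
  have st := run_stable vr u1.
  have iAu : i \in A u by apply: (subsetP (run_mono vr (t:=u.+1) (u:=u) _)) => //; lia.
  have sub1 : A u.+1 \subset [set i].
    apply/subsetP => j jA; rewrite inE; apply/negPn/negP => ji.
    have jAu : j \in A u by apply: (subsetP (run_mono vr (t:=u.+1) (u:=u) _)) => //; lia.
    have : ~~ (@Dset V N v G u j \subset @Dset V N v G u i) by apply: (stable_not_sub st) => //; rewrite eq_sym.
    move/negP; apply; apply/subsetP => y _; rewrite /Dset mem_cint hd hmu; have := dist_lt i y; rewrite /N; lia.
  have := subset_leq_card sub1; rewrite cards1 => c1.
  have r1 := leq_trans hA c1; have {}r1 : r = 1 by lia. have k0 : k = 0 by lia. subst r k; lia.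
- rewrite negb_exists => /forallP hnw.
  have hnw' : forall i, i \in A t -> @mv V N v G t i < N.
    by move=> i iA; have := hnw i; rewrite iA /= ltnNge.
  have st := run_stable vr ht.
  have s1 := stable_sum st.
  have s2 : \sum_(i in A t) (@mv V N v G t i + 1) <= \sum_(i in A t) #|@Dset V N v G t i|.
    by apply: leq_sum => i iA; apply: card_D; apply: hnw'.
  rewrite big_split /= sum1_card in s2.
  have htN : t <= N by case/andP: ht.
  have s3 := mv_sum (k:=k) vr htN hb.
  have s4 : t * (r - 2 * k) <= t * (#|A t| - 2 * k) by apply: leq_mul => //; apply: leq_sub2r.
  move: s1 s2 s3 s4; set X := \sum_(i in A t) _; set Y := \sum_(i in A t) _.
  move: hA; set Z := #|A t|; set P := t * (r - 2 * k); set Q := t * (Z - 2 * k). clearbody X Y Z P Q; lia.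
Qed.

Unset Implicit Arguments.
Import Order.TTheory GRing.Theory Num.Theory.

Theorem lemma8 (n k : nat) (V : finType) (T : {set {set V}}) (r0 : V)
  (v : nat -> V) (G : nat -> {set {set V}}) (A : nat -> {set 'I_(2 * (n - 1))})
  (t r : nat) :
  2 <= n -> #|V| = n ->
  is_tree T ->
  is_tour (2 * (n - 1)) v T r0 ->
  (forall t', 1 <= t' <= 2 * (n - 1) ->
     is_graph (G t') /\ #|T :\: G t'| <= k) ->
  valid_run v G A ->
  1 <= t <= 2 * (n - 1) ->
  2 * (n - 1) >= r -> r >= 2 * k + 1 ->
  #|A t| >= r ->
  (t%:Q <= ((2 * (2 * (n - 1)))%N%:Q - r%:Q) / (r%:Q - (2 * k)%N%:Q))%R.
Proof.
move=> hn _ _ htour hG vr ht hrN hr hA.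
have H := key hn htour hG vr ht hr hA.
have h2k : (2 * k <= r)%N by lia.
rewrite ler_pdivlMr; last by rewrite subr_gt0 ltr_nat; lia.
rewrite -natrB // -natrM -natrB; last by lia.
rewrite ler_nat; lia.
Qed.
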